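(* Let $k$ be a field and $\mathsf{E}$ a left strictly locally finite $k$-linear category. Then the class of left $\mathsf{E}$-modules isomorphic to $\Theta_\mathsf{E}(\mathfrak{P})$ for some locally finite left $\mathcal{C}_\mathsf{E}$-contramodule $\mathfrak{P}$ is closed under extensions in the category of left $\mathsf{E}$-modules (and in the category of locally finite left $\mathsf{E}$-modules): if $0\to P'\to T\to P''\to 0$ is a short exact sequence of left $\mathsf{E}$-modules and $P',P''$ belong to this class, then so does $T$.
   Context: A small $k$-linear category $\mathsf{E}$ has $k$-vector spaces $\operatorname{Hom}_\mathsf{E}(x,y)$, $k$-bilinear associative composition and identities with $\mathrm{id}_x\ne0$. A left $\mathsf{E}$-module is a $k$-linear functor $\mathsf{E}\to k\text{-Vect}$; locally finite if all its values are finite-dimensional. Write $x\preceq y$ if there are $n\ge1$ and objects $x=z_0,\dots,z_n=y$ with $\operatorname{Hom}_\mathsf{E}(z_{i-1},z_i)\neq0$ for all $i$; $x\prec y$ means $x\preceq y$ and not $y\preceq x$. $\mathsf{E}$ is locally finite if all Hom spaces are finite-dimensional and every $\{z:x\preceq z\preceq y\}$ is finite; left strictly locally finite if moreover for every $y$ there is a finite set $X_y$ of objects with $x\prec y$ for $x\in X_y$ such that every $f:z\to y$ with $z\prec y$ equals $\sum_{i=1}^nh_ig_i$ ($n\ge0$) with $g_i:z\to x_i$, $h_i:x_i\to y$, $x_i\in X_y$. $\mathcal{C}_\mathsf{E}=\bigoplus_{x,y}\mathcal{C}^{x,y}$, $\mathcal{C}^{x,y}=\operatorname{Hom}_\mathsf{E}(x,y)^*$;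 counit zero on $\mathcal{C}^{x,y}$ for $x\ne y$, evaluation at $\mathrm{id}_x$ on $\mathcal{C}^{x,x}$; comultiplication $\mathcal{C}^{x,y}\to\bigoplus_z\mathcal{C}^{x,z}\otimes\mathcal{C}^{z,y}$ dual to composition $g\otimes h\mapsto hg$. A left contramodule over a coalgebra $(\mathcal{C},\mu,\epsilon)$ is a space $\mathfrak{P}$ with $\pi:\operatorname{Hom}_k(\mathcal{C},\mathfrak{P})\to\mathfrak{P}$ such that $\pi(c\mapsto\epsilon(c)p)=p$ and, under $\operatorname{Hom}_k(\mathcal{C},\operatorname{Hom}_k(\mathcal{C},\mathfrak{P}))\cong\operatorname{Hom}_k(\mathcal{C}\otimes\mathcal{C},\mathfrak{P})$, $f\mapsto(c'\otimes c''\mapsto f(c'')(c'))$, $\pi(c\mapsto\pi(f(c)))=\pi(f\circ\mu)$. Set $\varphi\cdot p=\pi(c\mapsto\varphi(c)p)$. With $e_x$ evaluation at $\mathrm{id}_x$ on $\mathcal{C}^{x,x}$ (zero elsewhere) and $\mathrm{ev}_f$, for $f\in\operatorname{Hom}_\mathsf{E}(x,y)$, evaluation at $f$ on $\mathcal{C}^{x,y}$ (zero elsewhere): $\Theta_\mathsf{E}(\mathfrak{P})(x)=e_x\cdot\mathfrak{P}$, $f$ acting by $p\mapsto\mathrm{ev}_f\cdot p$. $\mathfrak{P}$ is locally finite if $\Theta_\mathsf{E}(\mathfrak{P})$ is. *)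

(* Defs.v *)
From HB Require Import structures.
From mathcomp Require Import all_boot all_order all_algebra.
From Stdlib Require List.
From Stdlib Require Import ClassicalEpsilon.
Set Implicit Arguments.
Unset Strict Implicit.
Unset Printing Implicit Defensive.
Import GRing.Theory.
Local Open Scope ring_scope.

(* comp h g is the composite  hg : x -> z  of g : x -> y and h : y -> z.   *)
Record kcat (k : fieldType) : Type := KCat {
  Ob : Type;
  Hom : Ob -> Ob -> vectType k;
  comp : forall x y z : Ob, Hom y z -> Hom x y -> Hom x z;
  idm : forall x : Ob, Hom x x;
  comp_linl : forall x y z (g : Hom x y) (a : k) (h1 h2 : Hom y z),
      comp (a *: h1 + h2) g = a *: comp h1 g + comp h2 g;
  comp_linr : forall x y z (h : Hom y z) (a : k) (g1 g2 : Hom x y),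
      comp h (a *: g1 + g2) = a *: comp h g1 + comp h g2;
  comp_assoc : forall x y z w (f : Hom x y) (g : Hom y z) (h : Hom z w),
      comp h (comp g f) = comp (comp h g) f;
  comp_idl : forall x y (f : Hom x y), comp (idm y) f = f;
  comp_idr : forall x y (f : Hom x y), comp f (idm x) = f;
  idm_neq0 : forall x : Ob, idm x != 0
}.
Arguments comp {k} e {x y z} : rename.
Arguments idm {k} e x : rename.
Arguments Hom {k} e x y : rename.

Section Defs.
Variables (k : fieldType) (E : kcat k).
Local Notation Ob := (Ob E).
Local Notation Hom := (Hom E).

Definition hom_nz (x y : Ob) : Prop := exists f : Hom x y, f != 0.

Inductive preceq : Ob -> Ob -> Prop :=
| preceq1 x y : hom_nz x y -> preceq x y
| preceqS x y z : hom_nz x y -> preceq y z -> preceq x z.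

Definition prec (x y : Ob) : Prop := preceq x y /\ ~ preceq y x.

(* finite-dimensionality of all Hom spaces is built into vectType *)
Definition locally_finite : Prop :=
  forall x y : Ob, exists zs : seq Ob,
    forall z, preceq x z -> preceq z y -> List.In z zs.

Definition left_strictly_locally_finite : Prop :=
  locally_finite /\
  forall y : Ob, exists Xy : seq Ob,
    (forall x, List.In x Xy -> prec x y) /\
    forall (z : Ob) (f : Hom z y), prec z y ->
      exists (n : nat) (xs : 'I_n -> Ob),
        (forall i, List.In (xs i) Xy) /\
        exists (g : forall i, Hom z (xs i)) (h : forall i, Hom (xs i) y),
          f = \sum_(i < n) comp E (h i) (g i).

Record lmodE : Type := LModE {
  Mv : Ob -> lmodType k;
  Mact : forall x y : Ob, Hom x y -> Mv x -> Mv y;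
  Mact_linf : forall x y (a : k) (f1 f2 : Hom x y) (m : Mv x),
      Mact (a *: f1 + f2) m = a *: Mact f1 m + Mact f2 m;
  Mact_linm : forall x y (f : Hom x y) (a : k) (m1 m2 : Mv x),
      Mact f (a *: m1 + m2) = a *: Mact f m1 + Mact f m2;
  Mact_comp : forall x y z (g : Hom x y) (h : Hom y z) (m : Mv x),
      Mact (comp E h g) m = Mact h (Mact g m);
  Mact_id : forall x (m : Mv x), Mact (idm E x) m = m
}.

Definition is_lin (U V : lmodType k) (f : U -> V) : Prop :=
  forall (a : k) (u v : U), f (a *: u + v) = a *: f u + f v.

Definition is_morph (M N : lmodE) (phi : forall x, Mv M x -> Mv N x) : Prop :=
  (forall x, is_lin (phi x)) /\
  (forall x y (f : Hom x y) (m : Mv M x), phi y (Mact f m) = Mact f (phi x m)).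

Definition short_exact (A B C : lmodE)
    (alpha : forall x, Mv A x -> Mv B x) (beta : forall x, Mv B x -> Mv C x) :
    Prop :=
  is_morph alpha /\ is_morph beta /\
  (forall x, injective (alpha x)) /\
  (forall x (c : Mv C x), exists b, beta x b = c) /\
  (forall x (b : Mv B x), beta x b = 0 <-> exists a, alpha x a = b).

(* The coalgebra C_E = (+)_{x,y} Hom(x,y)^*  and its contramodules.        *)
(* C^{x,y} = Hom_k(Hom(x,y), k).  A linear map C_E -> P is the same as a   *)
(* family of linear maps C^{x,y} -> P (universal property of (+)).         *)
Definition Cxy (x y : Ob) := 'Hom(Hom x y, (k^o)%type).

Definition fam (P : lmodType k) := forall x y : Ob, Cxy x y -> P.

(* the elements of Hom_k(C_E, P) *)
Definition linfam (P : lmodType k) (F : fam P) : Prop :=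
  forall x y, is_lin (F x y).

Definition cast_hom (x y z w : Ob) (H : x = z /\ y = w) (f : Hom x y) : Hom z w :=
  match H with
  | conj e1 e2 =>
      match e1 in _ = a return Hom a w with
      | erefl => match e2 in _ = b return Hom x b with erefl => f end
      end
  end.

(* the element of Hom_k(C_E, P) given by  c |-> ev_f(c) p ,
   f : x -> y :  c(f) p on C^{x,y}, zero on the other components *)
Definition evfam (P : lmodType k) (x y : Ob) (f : Hom x y) (p : P) : fam P :=
  fun z w (c : Cxy z w) =>
    match excluded_middle_informative (x = z /\ y = w) with
    | left H => ((c (cast_hom H f) : k) *: p)
    | right _ => 0
    end.

(* counit: c |-> eps(c) p  =  evaluation at id_x on each C^{x,x} *)
Definition counit_fam_spec (P : lmodType k) (p : P) (F : fam P) : Prop :=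
  (forall x (c : Cxy x x), F x x c = (c (idm E x) : k) *: p) /\
  (forall x y, x <> y -> forall c : Cxy x y, F x y c = 0).

(* a duplicate-free list containing the interval {z | x <= z <= y}
   (exists when E is locally finite) *)
Definition interval_list (x y : Ob) : seq Ob :=
  epsilon (inhabits [::]) (fun zs : seq Ob =>
     List.NoDup zs /\ forall z, preceq x z -> preceq z y -> List.In z zs).

Definition dualb (x z : Ob) (i : 'I_(\dim (fullv : {vspace Hom x z}))) : Cxy x z :=
  linfun (fun g : Hom x z =>
            (coord (vbasis (fullv : {vspace Hom x z})) i g : (k^o)%type)).

Definition precomp (x y z : Ob) (c : Cxy x y) (g : Hom x z) : Cxy z y :=
  linfun (fun h : Hom z y => c (comp E h g)).

(* Given f : C_E -> Hom_k(C_E, P), viewed as the map C_E (x) C_E -> P,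
   c' (x) c'' |-> f(c'')(c'), this is the composite f o mu.  The component
   of mu(c), c in C^{x,y}, in C^{x,z} (x) C^{z,y} is
   sum_i g_i^* (x) c(- o g_i)  for a basis (g_i) of Hom(x,z)
   (the element dual to g (x) h |-> c(hg)). *)
Definition comul_fam (P : lmodType k) (f : forall z w, Cxy z w -> fam P) : fam P :=
  fun x y (c : Cxy x y) =>
    \sum_(z <- interval_list x y)
      \sum_(i < \dim (fullv : {vspace Hom x z}))
        f z y (precomp c (vbasis (fullv : {vspace Hom x z}))`_i) x z (dualb i).

Definition is_contramodule (P : lmodType k) (pi : fam P -> P) : Prop :=
  (forall (a : k) (F G : fam P), linfam F -> linfam G ->
      pi (fun x y c => a *: F x y c + G x y c) = a *: pi F + pi G) /\
  (forall (p : P) (F : fam P), linfam F -> counit_fam_spec p F -> pi F = p) /\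
  (forall f : forall z w, Cxy z w -> fam P,
      (forall z w c, linfam (f z w c)) ->
      (forall z w (a : k) (c d : Cxy z w) z' w' (c' : Cxy z' w'),
          f z w (a *: c + d) z' w' c' = a *: f z w c z' w' c' + f z w d z' w' c') ->
      pi (fun z w c => pi (f z w c)) = pi (comul_fam f)).

(* Theta_E(P)(x) = e_x . P  (as a subset of P) *)
Definition inTheta (P : lmodType k) (pi : fam P -> P) (x : Ob) (q : P) : Prop :=
  exists p : P, q = pi (evfam (idm E x) p).

Definition contra_locally_finite (P : lmodType k) (pi : fam P -> P) : Prop :=
  forall x : Ob, exists s : seq P,
    (forall q, List.In q s -> inTheta pi x q) /\
    (forall q, inTheta pi x q ->
       exists cs : 'I_(size s) -> k, q = \sum_(i < size s) cs i *: s`_i).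

(* M is isomorphic, as a left E-module, to Theta_E(P), where f : x -> y acts
   on Theta_E(P) by p |-> ev_f . p *)
Definition iso_Theta (M : lmodE) (P : lmodType k) (pi : fam P -> P) : Prop :=
  exists phi : forall x, Mv M x -> P,
    (forall x, is_lin (phi x)) /\
    (forall x, injective (phi x)) /\
    (forall x (q : P), inTheta pi x q <-> exists m, phi x m = q) /\
    (forall x y (f : Hom x y) (m : Mv M x),
        phi y (Mact f m) = pi (evfam f (phi x m))).

Definition in_Theta_class (M : lmodE) : Prop :=
  exists (P : lmodType k) (pi : fam P -> P),
    is_contramodule pi /\ contra_locally_finite pi /\ iso_Theta M pi.

End Defs.

(* Main.v *)
From HB Require Import structures.
From mathcomp Require Import all_boot all_order all_algebra.
From mathcomp Require Import boolp zify.
Require Import Defs.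
From Stdlib Require List.
From Stdlib Require Import ClassicalEpsilon FunctionalExtensionality ProofIrrelevance.
Set Implicit Arguments. Unset Strict Implicit. Unset Printing Implicit Defensive.
Import GRing.Theory.
Local Open Scope ring_scope.

Section P0.
Variables (k : fieldType) (E : kcat k).
Definition obT := Ob E.
HB.instance Definition _ := gen_eqMixin obT.

Lemma inP_In (x : obT) (s : seq obT) : (x \in s) <-> List.In x s.
Proof.
elim: s => [|a s IH] /=; first by rewrite in_nil.
rewrite in_cons; split.
  by case/orP => [/eqP->|/IH]; [left|right].
by case=> [->|/IH ->]; rewrite ?eqxx ?orbT.
Qed.

Lemma uniq_NoDup (s : seq obT) : uniq s <-> List.NoDup s.
Proof.
elim: s => [|a s IH] /=; first by split => // _; constructor.
split.
  case/andP => ha hs; constructor; last by apply/IH.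
  by move/inP_In; rewrite (negbTE ha).
move=> hn; inversion hn; subst; apply/andP; split; last by apply/IH.
by apply/negP => /inP_In.
Qed.

Lemma selfadd0 (V : zmodType) (a : V) : a = a + a -> a = 0.
Proof. by move=> h; apply: (@addrI _ a); rewrite addr0 -h. Qed.

Section MactL.
Variable M : lmodE E.
Lemma Mact_addf x y (f g : Hom E x y) (m : Mv M x) : Mact (f + g) m = Mact f m + Mact g m.
Proof. by rewrite -{1}[f]scale1r Mact_linf !scale1r. Qed.
Lemma Mact_0f x y (m : Mv M x) : Mact (0 : Hom E x y) m = 0.
Proof.
have := Mact_addf (0 : Hom E x y) 0 m; by rewrite addr0 => /selfadd0.
Qed.
Lemma Mact_scalef x y a (f : Hom E x y) (m : Mv M x) : Mact (a *: f) m = a *: Mact f m.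
Proof. by rewrite -[a *: f]addr0 Mact_linf Mact_0f addr0. Qed.
Lemma Mact_sumf x y I (s : seq I) (F : I -> Hom E x y) (m : Mv M x) :
  Mact (\sum_(i <- s) F i) m = \sum_(i <- s) Mact (F i) m.
Proof.
elim: s => [|a s IH]; first by rewrite !big_nil Mact_0f.
by rewrite !big_cons Mact_addf IH.
Qed.
Lemma Mact_addm x y (f : Hom E x y) (m1 m2 : Mv M x) : Mact f (m1 + m2) = Mact f m1 + Mact f m2.
Proof. by rewrite -{1}[m1]scale1r Mact_linm !scale1r. Qed.
Lemma Mact_0m x y (f : Hom E x y) : Mact f (0 : Mv M x) = 0.
Proof.
have := Mact_addm f 0 0; by rewrite addr0 => /selfadd0.
Qed.
Lemma Mact_scalem x y a (f : Hom E x y) (m : Mv M x) : Mact f (a *: m) = a *: Mact f m.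
Proof. by rewrite -[a *: m]addr0 Mact_linm Mact_0m addr0. Qed.
Lemma Mact_summ x y I (s : seq I) (F : I -> Mv M x) (f : Hom E x y) :
  Mact f (\sum_(i <- s) F i) = \sum_(i <- s) Mact f (F i).
Proof.
elim: s => [|a s IH]; first by rewrite !big_nil Mact_0m.
by rewrite !big_cons Mact_addm IH.
Qed.
Lemma Mact_oppm x y (f : Hom E x y) (m : Mv M x) : Mact f (- m) = - Mact f m.
Proof. by rewrite -scaleN1r Mact_scalem scaleN1r. Qed.
End MactL.

Lemma comp_addl x y z (g : Hom E x y) (h1 h2 : Hom E y z) :
  comp E (h1 + h2) g = comp E h1 g + comp E h2 g.
Proof. by rewrite -{1}[h1]scale1r comp_linl !scale1r. Qed.
Lemma comp_0l x y z (g : Hom E x y) : comp E (0 : Hom E y z) g = 0.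
Proof.
have := comp_addl g (0 : Hom E y z) 0; by rewrite addr0 => /selfadd0.
Qed.
Lemma comp_suml x y z I (s : seq I) (F : I -> Hom E y z) (g : Hom E x y) :
  comp E (\sum_(i <- s) F i) g = \sum_(i <- s) comp E (F i) g.
Proof.
elim: s => [|a s IH]; first by rewrite !big_nil comp_0l.
by rewrite !big_cons comp_addl IH.
Qed.
Lemma comp_scalel x y z a (g : Hom E x y) (h : Hom E y z) :
  comp E (a *: h) g = a *: comp E h g.
Proof. by rewrite -[a *: h]addr0 comp_linl comp_0l addr0. Qed.
Lemma comp_addr x y z (h : Hom E y z) (g1 g2 : Hom E x y) :
  comp E h (g1 + g2) = comp E h g1 + comp E h g2.
Proof. by rewrite -{1}[g1]scale1r comp_linr !scale1r. Qed.
Lemma comp_0r x y z (h : Hom E y z) : comp E h (0 : Hom E x y) = 0.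
Proof.
have := comp_addr h (0 : Hom E x y) 0; by rewrite addr0 => /selfadd0.
Qed.
Lemma comp_sumr x y z I (s : seq I) (F : I -> Hom E x y) (h : Hom E y z) :
  comp E h (\sum_(i <- s) F i) = \sum_(i <- s) comp E h (F i).
Proof.
elim: s => [|a s IH]; first by rewrite !big_nil comp_0r.
by rewrite !big_cons comp_addr IH.
Qed.
Lemma comp_scaler x y z a (g : Hom E x y) (h : Hom E y z) :
  comp E h (a *: g) = a *: comp E h g.
Proof. by rewrite -[a *: g]addr0 comp_linr comp_0r addr0. Qed.

Lemma preceq_trans (x y z : Ob E) : preceq x y -> preceq y z -> preceq x z.
Proof.
elim=> [a b hab|a b c hab _ IH] hz; first exact: preceqS hz.
exact: preceqS (IH hz).
Qed.
Lemma preceq_refl (x : Ob E) : preceq x x.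
Proof. by apply: preceq1; exists (idm E x); exact: idm_neq0. Qed.
Lemma hom_preceq (x y : Ob E) (f : Hom E x y) : f != 0 -> preceq x y.
Proof. by move=> hf; apply: preceq1; exists f. Qed.

Definition gb (x z : Ob E) (i : 'I_(\dim (fullv : {vspace Hom E x z}))) : Hom E x z :=
  (vbasis (fullv : {vspace Hom E x z}))`_i.

Lemma dualbE x z i (g : Hom E x z) :
  dualb i g = coord (vbasis (fullv : {vspace Hom E x z})) i g.
Proof. by rewrite /dualb lfunE. Qed.

Lemma basis_expand x z (g : Hom E x z) :
  g = \sum_(i < \dim (fullv : {vspace Hom E x z})) coord (vbasis fullv) i g *: gb i.
Proof. exact: (coord_vbasis (memvf g)). Qed.

Lemma dual_expand (x z : Ob E) (l : Cxy x z) :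
  l = \sum_(i < \dim (fullv : {vspace Hom E x z})) (l (gb i) : k) *: dualb i.
Proof.
apply/lfunP => g; rewrite sum_lfunE.
rewrite {1}(basis_expand g) linear_sum /=.
apply: eq_bigr => i _; rewrite linearZ /= scale_lfunE dualbE.
by rewrite /GRing.scale /= mulrC.
Qed.

Lemma dim_pos_nz (V : vectType k) : (0 < \dim (fullv : {vspace V}))%N -> exists v : V, v != 0.
Proof.
move=> hd; apply: contrapT => hn.
have : (fullv : {vspace V}) == 0%VS.
  apply/eqP/vspaceP => v; rewrite memvf memv0; apply/esym/eqP.
  by apply: contrapT => hv; apply: hn; exists v; apply/eqP.
by rewrite -dimv_eq0 => /eqP h; rewrite h in hd.
Qed.

End P0.

Lemma linfunE' (k : fieldType) (aT rT : vectType k) (f : aT -> rT) :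
  linear f -> linfun f =1 f.
Proof.
move=> lf.
pose F : {linear aT -> rT} := HB.pack f (GRing.isLinear.Build k aT rT *:%R f lf).
exact: (lfunE F).
Qed.

Ltac famext := apply: functional_extensionality_dep => ?;
  apply: functional_extensionality_dep => ?; apply: functional_extensionality => ?.

Section P1.
Variables (k : fieldType) (E : kcat k).

Section Ev.
Variable P : lmodType k.

Lemma evfam_eq (x y : Ob E) (f : Hom E x y) (p : P) (c : Cxy x y) :
  evfam f p c = (c f : k) *: p.
Proof.
rewrite /evfam; case: excluded_middle_informative => [H|H]; last by exfalso; apply: H.
by rewrite (proof_irrelevance _ H (conj erefl erefl)).
Qed.

Lemma evfam_ne (x y u w : Ob E) (f : Hom E x y) (p : P) (c : Cxy u w) :
  ~ (x = u /\ y = w) -> evfam f p c = 0.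
Proof.
by move=> hn; rewrite /evfam; case: excluded_middle_informative => [H|H] //.
Qed.

Lemma evfam_lin (x y : Ob E) (f : Hom E x y) (p : P) : linfam (evfam f p).
Proof.
move=> u w a c d.
case: (excluded_middle_informative (x = u /\ y = w)) => [[hu hw]|hn]; last first.
  by rewrite !evfam_ne // scaler0 addr0.
subst u w; rewrite !evfam_eq add_lfunE scale_lfunE.
by rewrite scalerDl scalerA.
Qed.

Definition lam (u z y : Ob E) (h : Hom E z y) (c : Cxy u y) : Cxy u z :=
  linfun (fun g : Hom E u z => c (comp E h g)).

Lemma lamE (u z y : Ob E) (h : Hom E z y) (c : Cxy u y) (g : Hom E u z) :
  lam h c g = c (comp E h g).
Proof.
rewrite /lam linfunE' // => a g1 g2.
by rewrite comp_linr linearD linearZ.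
Qed.

Lemma evfam_lam (x z y u : Ob E) (f : Hom E x z) (h : Hom E z y) (p : P) (c : Cxy u y) :
  evfam f p (lam h c) = evfam (comp E h f) p c.
Proof.
case: (excluded_middle_informative (x = u)) => [hu|hn].
  by subst u; rewrite !evfam_eq lamE.
by rewrite !evfam_ne // => -[].
Qed.

Lemma precompE (x y z : Ob E) (c : Cxy x y) (g : Hom E x z) (h : Hom E z y) :
  precomp c g h = c (comp E h g).
Proof.
rewrite /precomp linfunE' // => a h1 h2.
by rewrite comp_linl linearD linearZ.
Qed.

Definition fam0 : fam E P := fun _ _ _ => 0.
Arguments fam0 : clear implicits.

Lemma linfam0 : linfam fam0.
Proof. by move=> x y a c d; rewrite /fam0 scaler0 addr0. Qed.

Lemma linfam_sum I (s : seq I) (a : I -> k) (F : I -> fam E P) :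
  (forall i, linfam (F i)) ->
  linfam (fun x y c => \sum_(i <- s) a i *: F i x y c).
Proof.
move=> hF x y b c d.
rewrite scaler_sumr -big_split /=; apply: eq_bigr => i _.
by rewrite hF scalerDr !scalerA mulrC.
Qed.

Lemma linfam_sub (F G : fam E P) : linfam F -> linfam G ->
  linfam (fun x y c => F x y c - G x y c).
Proof.
move=> hF hG x y a c d; rewrite hF hG scalerBr.
by rewrite opprD !addrA; congr (_ + _); rewrite addrAC.
Qed.

Variable pi : fam E P -> P.
Hypothesis hc : is_contramodule pi.

Lemma pi_lin a (F G : fam E P) : linfam F -> linfam G ->
  pi (fun x y c => a *: F x y c + G x y c) = a *: pi F + pi G.
Proof. by case: hc => h _; exact: h. Qed.

Lemma pi0 : pi fam0 = 0.
Proof.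
have := pi_lin 1 linfam0 linfam0.
have -> : (fun x y c => 1 *: fam0 x y c + fam0 x y c) = fam0.
  by famext; rewrite /fam0 scaler0 addr0.
by rewrite scale1r; apply: selfadd0.
Qed.

Lemma pi_sum I (s : seq I) (a : I -> k) (F : I -> fam E P) :
  (forall i, linfam (F i)) ->
  pi (fun x y c => \sum_(i <- s) a i *: F i x y c) = \sum_(i <- s) a i *: pi (F i).
Proof.
move=> hF; elim: s => [|i s IH].
  rewrite big_nil -[RHS]pi0; congr pi; famext; by rewrite big_nil /fam0.
rewrite big_cons -IH -pi_lin //; last exact: linfam_sum.
by congr pi; famext; rewrite big_cons.
Qed.

Lemma pi_sub (F G : fam E P) : linfam F -> linfam G ->
  pi (fun x y c => F x y c - G x y c) = pi F - pi G.
Proof.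
move=> hF hG.
have := @pi_sum bool [:: true; false] (fun b => if b then 1 else -1)
  (fun b => if b then F else G)
  (fun b : bool => match b as b0 return linfam (if b0 then F else G) with true => hF | false => hG end).
rewrite !big_cons big_nil /= !addr0 !scale1r !scaleN1r => <-.
by congr pi; famext; rewrite !big_cons big_nil /= addr0 scale1r scaleN1r.
Qed.

End Ev.
End P1.

Lemma In_mem (T : eqType) (x : T) (s : seq T) : (x \in s) <-> List.In x s.
Proof.
elim: s => [|a s IH] /=; first by rewrite in_nil.
rewrite in_cons; split.
  by case/orP => [/eqP->|/IH]; [left|right].
by case=> [->|/IH ->]; rewrite ?eqxx ?orbT.
Qed.

Lemma In_map (A B : Type) (F : A -> B) (s : seq A) (b : B) :
  List.In b (map F s) <-> exists a, List.In a s /\ b = F a.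
Proof.
elim: s => [|a s IH] /=; first by split => //; case => ? [].
split.
  case=> [hb|hin]; first by exists a; split; [left|].
  have [a' [h hb]] := proj1 IH hin.
  by exists a'; split; [right|].
case=> a' [[ha|h] hb]; first by left; rewrite hb ha.
by right; apply/IH; exists a'.
Qed.

Lemma In_flatten (A : Type) (ss : seq (seq A)) (b : A) :
  List.In b (flatten ss) <-> exists s, List.In s ss /\ List.In b s.
Proof.
elim: ss => [|s ss IH] /=; first by split => // -[? []].
rewrite List.in_app_iff; split.
  by case=> [h|/IH [s' [h1 h2]]]; [exists s; split; [left|]|exists s'; split; [right|]].
by case=> s' [[<-|h1] h2]; [left|right; apply/IH; exists s'].
Qed.

Lemma choose_fun (A B : Type) (b0 : B) (s : seq A) (Q : A -> B -> Prop) :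
  (forall a, List.In a s -> exists b, Q a b) ->
  exists F : A -> B, forall a, List.In a s -> Q a (F a).
Proof.
move=> h.
exists (fun a => epsilon (inhabits b0) (Q a)).
by move=> a ha; apply: epsilon_spec; exact: h.
Qed.

Lemma choose_dfun (A : Type) (B : A -> Type) (b0 : forall a, B a) (s : seq A)
  (Q : forall a, B a -> Prop) :
  (forall a, List.In a s -> exists b, Q a b) ->
  exists F : forall a, B a, forall a, List.In a s -> Q a (F a).
Proof.
move=> h.
exists (fun a => epsilon (inhabits (b0 a)) (Q a)).
by move=> a ha; apply: epsilon_spec; exact: h.
Qed.

Lemma eq_sum_In (V : zmodType) (I : Type) (s : seq I) (F G : I -> V) :
  (forall i, List.In i s -> F i = G i) -> \sum_(i <- s) F i = \sum_(i <- s) G i.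
Proof.
elim: s => [|a s IH] h; first by rewrite !big_nil.
rewrite !big_cons h; last by left.
by rewrite IH // => i hi; apply: h; right.
Qed.

Lemma sum0_In (V : zmodType) (I : Type) (s : seq I) (F : I -> V) :
  (forall i, List.In i s -> F i = 0) -> \sum_(i <- s) F i = 0.
Proof.
move=> h; rewrite (@eq_sum_In _ _ s F (fun _ => 0)) ?big1 //.
Qed.

Lemma lin0 (k : fieldType) (U V : lmodType k) (f : U -> V) : is_lin f -> f 0 = 0.
Proof.
move=> h; have := h 1 0 0; rewrite !scale1r addr0; exact: selfadd0.
Qed.

Section P2.
Variables (k : fieldType) (E : kcat k).

Lemma interval_spec (hlf : locally_finite E) (x y : Ob E) :
  List.NoDup (interval_list x y) /\
  forall z, preceq x z -> preceq z y -> List.In z (interval_list x y).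
Proof.
have hex : exists zs : seq (Ob E), List.NoDup zs /\
    forall z, preceq x z -> preceq z y -> List.In z zs.
  have [zs hzs] := hlf x y.
  exists (undup (zs : seq (obT E))); split.
    by apply/uniq_NoDup; exact: undup_uniq.
  by move=> z h1 h2; apply/(@In_mem (obT E)); rewrite mem_undup; apply/(@In_mem (obT E)); exact: hzs.
exact: (epsilon_spec (inhabits [::]) _ hex).
Qed.

Variable hS : left_strictly_locally_finite E.

Definition Xs (y : Ob E) : seq (Ob E) :=
  proj1_sig (constructive_indefinite_description _ (proj2 hS y)).

Lemma Xs_spec (y : Ob E) :
  (forall x, List.In x (Xs y) -> prec x y) /\
  forall (z : Ob E) (f : Hom E z y), prec z y ->
      exists (n : nat) (xs : 'I_n -> Ob E),
        (forall i, List.In (xs i) (Xs y)) /\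
        exists (g : forall i, Hom E z (xs i)) (h : forall i, Hom E (xs i) y),
          f = \sum_(i < n) comp E (h i) (g i).
Proof. exact: proj2_sig (constructive_indefinite_description _ (proj2 hS y)). Qed.

Lemma Xs_prec (x y : Ob E) : List.In x (Xs y) -> prec x y.
Proof. exact: (proj1 (Xs_spec y)). Qed.

Fixpoint deep (N : nat) (y x : Ob E) (f : Hom E x y) {struct N} : Prop :=
  match N with
  | 0 => True
  | N'.+1 => exists s : seq {w : Ob E & (Hom E w y * Hom E x w)%type},
      (forall t, List.In t s -> List.In (tag t) (Xs y) /\ deep N' (tagged t).2)
      /\ f = \sum_(t <- s) comp E (tagged t).1 (tagged t).2
  end.
Arguments deep : clear implicits.

Lemma deep_mono N y x f : deep N.+1 y x f -> deep N y x f.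
Proof.
elim: N y x f => [//|N IH] y x f [s [hs ->]].
exists s; split => // t ht; have [h1 h2] := hs t ht; split => //; exact: IH.
Qed.

Lemma deep_le m n y x f : (m <= n)%N -> deep n y x f -> deep m y x f.
Proof.
move=> /subnK <-; elim: (n - m)%N => [//|d IH] h.
by apply: IH; apply: deep_mono; rewrite -addSn.
Qed.

Fixpoint R (N : nat) (y : Ob E) : seq (Ob E) :=
  match N with
  | 0 => interval_list y y
  | N'.+1 => interval_list y y ++ flatten (map (R N') (Xs y))
  end.

Lemma fact1 N y x (f : Hom E x y) : ~ List.In x (R N y) -> deep N y x f.
Proof.
elim: N y f => [//|N IH] y f hx /=.
have [hI hIc] := interval_spec (proj1 hS) y y.
case: (eqVneq f 0) => [->|hf].
  by exists [::]; split => //; rewrite big_nil.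
have hxy := hom_preceq hf.
have hp : prec x y.
  split => // hyx; apply: hx; rewrite /= List.in_app_iff; left; exact: hIc.
have [n [xs [hin [g [h ->]]]]] := (proj2 (Xs_spec y)) x f hp.
exists (map (fun i => existT (fun w => (Hom E w y * Hom E x w)%type) (xs i) (h i, g i))
         (index_enum 'I_n)); split; last by rewrite big_map.
move=> t /In_map [i [_ ->]] /=; split => //.
apply: IH => hR; apply: hx; rewrite /= List.in_app_iff; right.
apply/In_flatten; exists (R N (xs i)); split => //.
by apply/In_map; exists (xs i).
Qed.

Fixpoint reach (a : nat) (y : Ob E) : seq (Ob E) :=
  match a with
  | 0 => [:: y]
  | a'.+1 => flatten (map (reach a') (Xs y))
  end.

Lemma deep_split a b y x (f : Hom E x y) : deep (a + b) y x f ->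
  exists s : seq {w : Ob E & (Hom E w y * Hom E x w)%type},
    (forall t, List.In t s -> List.In (tag t) (reach a y) /\
       deep a y (tag t) (tagged t).1 /\ deep b (tag t) x (tagged t).2)
    /\ f = \sum_(t <- s) comp E (tagged t).1 (tagged t).2.
Proof.
elim: a y f => [|a IH] y f.
  move=> hf; exists [:: existT (fun w => (Hom E w y * Hom E x w)%type) y (idm E y, f)].
  split; last by rewrite big_seq1 /= comp_idl.
  by move=> t [<-|//] /=; split; [left|].
rewrite addSn => -[s0 [hs0 ->]].
have [F hF] := @choose_dfun _ (fun t => seq {w : Ob E & (Hom E w (tag t) * Hom E x w)%type})
  (fun _ => [::]) s0 (fun t st =>
    (forall r, List.In r st -> List.In (tag r) (reach a (tag t)) /\
       deep a (tag t) (tag r) (tagged r).1 /\ deep b (tag r) x (tagged r).2)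
    /\ (tagged t).2 = \sum_(r <- st) comp E (tagged r).1 (tagged r).2)
  (fun t ht => IH (tag t) (tagged t).2 (proj2 (hs0 t ht))).
exists (flatten (map (fun t => map (fun r =>
   existT (fun w => (Hom E w y * Hom E x w)%type) (tag r)
      (comp E (tagged t).1 (tagged r).1, (tagged r).2)) (F t)) s0)).
split.
  move=> u /In_flatten [l [/In_map [t [ht ->]] /In_map [r [hr ->]]]] /=.
  have [hr1 [hr2 hr3]] := (proj1 (hF t ht)) r hr.
  split; last split => //.
    apply/In_flatten; exists (reach a (tag t)); split => //.
    by apply/In_map; exists (tag t); split => //; exact: (proj1 (hs0 t ht)).
  exists [:: existT (fun w => (Hom E w y * Hom E (tag r) w)%type) (tag t)
            ((tagged t).1, (tagged r).1)].
  split; last by rewrite big_seq1.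
  by move=> v [<-|//] /=; split => //; exact: (proj1 (hs0 t ht)).
rewrite big_flatten big_map /=; apply: eq_sum_In => t ht.
rewrite big_map (proj2 (hF t ht)) comp_sumr; apply: eq_bigr => r _.
by rewrite comp_assoc.
Qed.

Definition Nil (M : lmodE E) : Prop :=
  forall y : Ob E, exists N, forall x (f : Hom E x y) (m : Mv M x),
    deep N y x f -> Mact f m = 0.

Lemma nil_ext (P' T P'' : lmodE E) (alpha : forall x, Mv P' x -> Mv T x)
    (beta : forall x, Mv T x -> Mv P'' x) :
  short_exact alpha beta -> Nil P' -> Nil P'' -> Nil T.
Proof.
move=> [[ha1 ha2] [[hb1 hb2] [hinj [hsurj hex]]]] h1 h2 y.
have [N1 hN1] := h1 y.
have [F hF] := @choose_fun _ _ 0%N (reach N1 y) (fun w n => forall x (f : Hom E x w) (m : Mv P'' x),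
    deep n w x f -> Mact f m = 0) (fun w _ => h2 w).
exists (N1 + \max_(w <- reach N1 y) F w)%N => x f m hd.
have [s [hs ->]] := deep_split hd.
rewrite Mact_sumf sum0_In // => t ht.
have [hr [hda hdb]] := hs t ht.
rewrite Mact_comp.
have : beta _ (Mact (tagged t).2 m) = 0.
  rewrite hb2 (hF (tag t) hr) //; apply: deep_le hdb.
  by apply: (@leq_bigmax_seq (obT E) (reach N1 y) xpredT F (tag t)) => //; apply/In_mem.
move/hex => [a <-]; rewrite -ha2 (hN1 _ _ a hda).
exact: lin0.
Qed.

End P2.

Section Qdef.
Variables (k : fieldType) (E : kcat k) (T : lmodE E).

Definition QT := forall y : Ob E, Mv T y.
HB.instance Definition _ := gen_eqMixin QT.
HB.instance Definition _ := gen_choiceMixin QT.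

Definition zeroQ : QT := fun y => 0.
Definition addQ (a b : QT) : QT := fun y => a y + b y.
Definition oppQ (a : QT) : QT := fun y => - a y.
Definition scaleQ (c : k) (a : QT) : QT := fun y => c *: a y.

Ltac qext := apply: functional_extensionality_dep => ?.

Lemma addQA : associative addQ.
Proof. by move=> a b c; qext; rewrite /addQ addrA. Qed.
Lemma addQC : commutative addQ.
Proof. by move=> a b; qext; rewrite /addQ addrC. Qed.
Lemma add0Q : left_id zeroQ addQ.
Proof. by move=> a; qext; rewrite /addQ /zeroQ add0r. Qed.
Lemma addNQ : left_inverse zeroQ oppQ addQ.
Proof. by move=> a; qext; rewrite /addQ /oppQ /zeroQ addNr. Qed.

HB.instance Definition _ := GRing.isZmodule.Build QT addQA addQC add0Q addNQ.

Lemma scaleQA a b v : scaleQ a (scaleQ b v) = scaleQ (a * b) v.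
Proof. by qext; rewrite /scaleQ scalerA. Qed.
Lemma scale1Q : left_id 1 scaleQ.
Proof. by move=> v; qext; rewrite /scaleQ scale1r. Qed.
Lemma scaleQDr : right_distributive scaleQ +%R.
Proof. by move=> a u v; qext; rewrite /scaleQ /= /addQ scalerDr. Qed.
Lemma scaleQDl v : {morph scaleQ^~ v: a b / a + b}.
Proof. by move=> a b; qext; rewrite /scaleQ /= /addQ scalerDl. Qed.

HB.instance Definition _ := GRing.Zmodule_isLmodule.Build k QT scaleQA scale1Q scaleQDr scaleQDl.

Lemma QaddE (a b : QT) y : (a + b) y = a y + b y. Proof. by []. Qed.
Lemma QscaleE c (a : QT) y : (c *: a) y = c *: a y. Proof. by []. Qed.
Lemma Q0E y : (0 : QT) y = 0. Proof. by []. Qed.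
Lemma QsumE I (s : seq I) (F : I -> QT) y : (\sum_(i <- s) F i) y = \sum_(i <- s) F i y.
Proof.
elim: s => [|i s IH]; first by rewrite !big_nil.
by rewrite !big_cons QaddE IH.
Qed.

End Qdef.

Lemma sum_ord_empty (V : zmodType) n (F : 'I_n -> V) : n = 0%N -> \sum_(i < n) F i = 0.
Proof.
move=> hn; apply: big1 => i _; move: (nat_of_ord i) (ltn_ord i) => j.
by rewrite hn.
Qed.

Lemma sum_sub (I : eqType) (V : zmodType) (r1 r2 : seq I) (F : I -> V) :
  uniq r1 -> uniq r2 -> {subset r1 <= r2} ->
  (forall x, x \in r2 -> x \notin r1 -> F x = 0) ->
  \sum_(x <- r1) F x = \sum_(x <- r2) F x.
Proof.
move=> u1 u2 hsub h0.
rewrite [RHS](bigID (mem r1)) /= [X in _ + X]big1_seq ?addr0; last first.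
  by move=> x /andP [hx1 hx2]; apply: h0 => //.
rewrite -[RHS]big_filter; apply: perm_big; apply: uniq_perm => //.
  exact: filter_uniq.
by move=> x; rewrite mem_filter; case h: (x \in r1) => //=; rewrite hsub.
Qed.

Lemma lin_sum (k : fieldType) (U V : lmodType k) (f : U -> V) I (s : seq I) (a : I -> k) (u : I -> U) :
  is_lin f -> f (\sum_(i <- s) a i *: u i) = \sum_(i <- s) a i *: f (u i).
Proof.
move=> hf; elim: s => [|i s IH]; first by rewrite !big_nil; exact: lin0.
by rewrite !big_cons hf IH.
Qed.

Section PC.
Variables (k : fieldType) (E : kcat k).
Variable hS : left_strictly_locally_finite E.
Variable T : lmodE E.
Hypothesis hnil : Nil hS T.

Definition Dspec (y : Ob E) (D : seq (obT E)) : Prop :=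
  uniq D /\ y \in D /\ forall x : obT E, x \notin D -> forall (f : Hom E x y) (m : Mv T x), Mact f m = 0.

Lemma Dex y : exists D, Dspec y D.
Proof.
have [N hN] := hnil y.
exists (undup ((y : obT E) :: (R hS N y : seq (obT E)))); split; first exact: undup_uniq.
split; first by rewrite (@mem_undup (obT E)) mem_head.
move=> x hx f m; apply: hN; apply: fact1 => hin; move: hx.
by rewrite (@mem_undup (obT E)) in_cons => /norP [_ /negP]; apply; apply/In_mem.
Qed.

Definition Dl (y : Ob E) : seq (obT E) := epsilon (inhabits [::]) (Dspec y).

Lemma Dl_spec y : Dspec y (Dl y).
Proof. exact: (epsilon_spec (inhabits [::]) _ (Dex y)). Qed.

Lemma Dl_uniq y : uniq (Dl y). Proof. by case: (Dl_spec y). Qed.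
Lemma Dl_self y : y \in Dl y. Proof. by case: (Dl_spec y) => _ []. Qed.
Lemma Dl_zero y (x : obT E) : x \notin Dl y -> forall (f : Hom E x y) (m : Mv T x), Mact f m = 0.
Proof. by case: (Dl_spec y) => _ [] _; apply. Qed.

Definition piQ (F : fam E (QT T)) : QT T := fun y =>
  \sum_(x <- Dl y) \sum_(i < \dim (fullv : {vspace Hom E x y}))
     Mact (gb i) (F x y (dualb i) x).

Definition emb (x : Ob E) (m : Mv T x) : QT T := fun w =>
  match excluded_middle_informative (x = w) with
  | left H => eq_rect x (fun z => Mv T z) m w H
  | right _ => 0
  end.

Lemma emb_eq x m : emb m x = m.
Proof.
rewrite /emb; case: excluded_middle_informative => [H|H]; last by exfalso; apply: H.
by rewrite (proof_irrelevance _ H erefl).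
Qed.

Lemma emb_ne (x w : Ob E) (m : Mv T x) : x <> w -> emb m w = 0.
Proof. by move=> hn; rewrite /emb; case: excluded_middle_informative. Qed.

Lemma emb_lin x : is_lin (@emb x).
Proof.
move=> a m1 m2; apply: functional_extensionality_dep => w.
case: (excluded_middle_informative (x = w)) => [hw|hw].
  by subst w; rewrite QaddE QscaleE !emb_eq.
by rewrite QaddE QscaleE !emb_ne // scaler0 addr0.
Qed.

Lemma act_basis (x y : Ob E) (f : Hom E x y) (m : Mv T x) :
  \sum_(i < \dim (fullv : {vspace Hom E x y})) Mact (gb i) ((dualb i f : k) *: m) = Mact f m.
Proof.
rewrite [in RHS](basis_expand f) Mact_sumf; apply: eq_bigr => i _.
by rewrite Mact_scalem Mact_scalef dualbE.
Qed.

Lemma piQ_evfam (x y : Ob E) (f : Hom E x y) (q : QT T) :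
  piQ (evfam f q) = emb (Mact f (q x)).
Proof.
apply: functional_extensionality_dep => w; rewrite /piQ.
case: (excluded_middle_informative (y = w)) => [hw|hw]; last first.
  rewrite emb_ne // big1 // => z _; rewrite big1 // => i _.
  by rewrite evfam_ne ?Q0E ?Mact_0m // => -[].
subst w; rewrite emb_eq.
have hz : forall z : obT E, z != x ->
    \sum_(i < \dim (fullv : {vspace Hom E z y})) Mact (gb i) (evfam f q (dualb i) z) = 0.
  move=> z hzx; rewrite big1 // => i _.
  by rewrite evfam_ne ?Q0E ?Mact_0m // => -[h _]; move/eqP: hzx; rewrite h.
case hx: ((x : obT E) \in Dl y).
  rewrite (bigD1_seq (x : obT E)) ?Dl_uniq //= [X in _ + X]big1_seq ?addr0; last by move=> z /andP [hzx _]; apply: hz.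
  rewrite -act_basis; apply: eq_bigr => i _; by rewrite evfam_eq QscaleE.
rewrite big1_seq; last by move=> z /andP [_ hz2]; apply: hz; apply/eqP => h; move: hz2; rewrite h hx.
by rewrite (Dl_zero (negbT hx)).
Qed.


Lemma piQ_counit (p : QT T) (F : fam E (QT T)) : counit_fam_spec p F -> piQ F = p.
Proof.
move=> [h1 h2]; apply: functional_extensionality_dep => y; rewrite /piQ.
rewrite (bigD1_seq (y : obT E)) ?Dl_self ?Dl_uniq //= [X in _ + X]big1_seq ?addr0.
  rewrite -[RHS](Mact_id (p y)) -act_basis; apply: eq_bigr => i _.
  by rewrite h1 QscaleE.
move=> z /andP [hzy _]; apply: big1 => i _.
by rewrite h2 ?Q0E ?Mact_0m //; move/eqP: hzy.
Qed.

Lemma piQ_lin a (F G : fam E (QT T)) :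
  piQ (fun x y c => a *: F x y c + G x y c) = a *: piQ F + piQ G.
Proof.
apply: functional_extensionality_dep => y; rewrite /piQ QaddE QscaleE.
rewrite scaler_sumr -big_split; apply: eq_bigr => x _.
rewrite scaler_sumr -big_split; apply: eq_bigr => i _.
by rewrite QaddE QscaleE Mact_addm Mact_scalem.
Qed.

Lemma KC (u x y : Ob E) (g : Hom E u x) (Psi : Cxy x y -> Mv T u) : is_lin Psi ->
  \sum_(l < \dim (fullv : {vspace Hom E u y})) Mact (gb l) (Psi (precomp (dualb l) g)) =
  \sum_(i < \dim (fullv : {vspace Hom E x y})) Mact (comp E (gb i) g) (Psi (dualb i)).
Proof.
move=> hP.
transitivity (\sum_(l < \dim (fullv : {vspace Hom E u y}))
   \sum_(i < \dim (fullv : {vspace Hom E x y}))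
      ((precomp (dualb l) g) (gb i) : k) *: Mact (gb l) (Psi (dualb i))).
  apply: eq_bigr => l _; rewrite {1}(dual_expand (precomp (dualb l) g)).
  by rewrite (lin_sum _ _ _ hP) Mact_summ; apply: eq_bigr => i _; rewrite Mact_scalem.
rewrite exchange_big /=; apply: eq_bigr => i _.
rewrite [in RHS](basis_expand (comp E (gb i) g)) Mact_sumf; apply: eq_bigr => l _.
by rewrite Mact_scalef precompE dualbE.
Qed.

Section Assoc.
Variable f : forall z w : Ob E, Cxy z w -> fam E (QT T).
Arguments f : clear implicits.
Hypothesis hf1 : forall (z w : Ob E) c, linfam (f z w c).
Hypothesis hf2 : forall (z w : Ob E) (a : k) (c d : Cxy z w) (z' w' : Ob E) (c' : Cxy z' w'),
  f z w (a *: c + d) z' w' c' = a *: f z w c z' w' c' + f z w d z' w' c'.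

Definition Term (y x u : Ob E) : Mv T y :=
  \sum_(i < \dim (fullv : {vspace Hom E x y})) \sum_(j < \dim (fullv : {vspace Hom E u x}))
    Mact (comp E (gb i) (gb j)) (f x y (dualb i) u x (dualb j) u).

Lemma assoc_LHS y : piQ (fun z w c => piQ (f z w c)) y =
  \sum_(x <- Dl y) \sum_(u <- Dl x) Term y x u.
Proof.
rewrite /piQ; apply: eq_bigr => x _; rewrite /Term exchange_big /=.
apply: eq_bigr => i _; rewrite Mact_summ; apply: eq_bigr => u _.
rewrite Mact_summ; apply: eq_bigr => j _; by rewrite Mact_comp.
Qed.

Lemma assoc_RHS y : piQ (comul_fam f) y =
  \sum_(u <- Dl y) \sum_(x <- interval_list u y) Term y x u.
Proof.
rewrite /piQ; apply: eq_bigr => u _; rewrite /comul_fam.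
transitivity (\sum_(l < \dim (fullv : {vspace Hom E u y})) \sum_(x <- interval_list u y)
   \sum_(j < \dim (fullv : {vspace Hom E u x}))
      Mact (gb l) (f x y (precomp (dualb l) (gb j)) u x (dualb j) u)).
  apply: eq_bigr => l _; rewrite QsumE Mact_summ; apply: eq_bigr => x _.
  by rewrite QsumE Mact_summ.
rewrite exchange_big /=; apply: eq_bigr => x _; rewrite exchange_big /=.
rewrite /Term [RHS]exchange_big /=; apply: eq_bigr => j _.
rewrite (@KC u x y (gb j) (fun c => f x y c u x (dualb j) u)) //.
by move=> a c d; rewrite hf2 QaddE QscaleE.
Qed.

Lemma V1 y x u : (x : obT E) \notin Dl y -> Term y x u = 0.
Proof.
move=> hx; apply: big1 => i _; apply: big1 => j _.
by rewrite Mact_comp (Dl_zero hx).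
Qed.

Lemma V2 y x u : (u : obT E) \notin Dl x -> Term y x u = 0.
Proof.
move=> hu; apply: big1 => i _; apply: big1 => j _.
by rewrite Mact_comp (Dl_zero hu) Mact_0m.
Qed.

Lemma V3 y x u : (u : obT E) \notin Dl y -> Term y x u = 0.
Proof.
move=> hu; apply: big1 => i _; apply: big1 => j _.
by rewrite (Dl_zero hu).
Qed.

Lemma V4 y x u : (x : obT E) \notin (interval_list u y : seq (obT E)) -> Term y x u = 0.
Proof.
move=> hx; rewrite /Term.
case: (posnP (\dim (fullv : {vspace Hom E x y}))) => [h0|hp1].
  exact: sum_ord_empty.
apply: big1 => i _.
case: (posnP (\dim (fullv : {vspace Hom E u x}))) => [h0|hp2].
  exact: sum_ord_empty.
exfalso; move/negP: hx; apply.
have [v1 hv1] := dim_pos_nz hp1; have [v2 hv2] := dim_pos_nz hp2.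
apply/In_mem; apply: (proj2 (interval_spec (proj1 hS) u y)).
  exact: hom_preceq hv2.
exact: hom_preceq hv1.
Qed.

Lemma piQ_assoc : piQ (fun z w c => piQ (f z w c)) = piQ (comul_fam f).
Proof.
apply: functional_extensionality_dep => y; rewrite assoc_LHS assoc_RHS.
set X : seq (obT E) := undup (Dl y ++ flatten [seq (interval_list u y : seq (obT E)) | u <- Dl y]).
set U : seq (obT E) := undup (Dl y ++ flatten [seq Dl x | x <- X]).
have hX : uniq X by exact: undup_uniq.
have hU : uniq U by exact: undup_uniq.
have hIu : forall u : obT E, uniq (interval_list u y : seq (obT E)).
  by move=> u; apply/uniq_NoDup; exact: (proj1 (interval_spec (proj1 hS) u y)).
transitivity (\sum_(x <- X) \sum_(u <- U) Term y x u).
  transitivity (\sum_(x <- Dl y) \sum_(u <- U) Term y x u).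
    apply: eq_big_seq => x hx; apply: sum_sub => //; first exact: Dl_uniq.
      move=> u hu; rewrite /U mem_undup mem_cat; apply/orP; right.
      apply/flattenP; exists (Dl x) => //.
      by apply: map_f; rewrite /X mem_undup mem_cat hx.
    by move=> u _ hu; apply: V2.
  apply: sum_sub => //; first exact: Dl_uniq.
    by move=> x hx; rewrite /X mem_undup mem_cat hx.
  by move=> x _ hx; apply: big1 => u _; apply: V1.
symmetry.
transitivity (\sum_(u <- Dl y) \sum_(x <- X) Term y x u).
  apply: eq_big_seq => u hu; apply: (@sum_sub (obT E)) => //.
    move=> x hx; rewrite /X mem_undup mem_cat; apply/orP; right.
    apply/flattenP; exists (interval_list u y : seq (obT E)) => //; exact: (map_f (fun u0 : obT E => (interval_list u0 y : seq (obT E))) hu).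
  by move=> x _ hx; apply: V4.
rewrite exchange_big /=; apply: eq_bigr => x _.
apply: sum_sub => //; first exact: Dl_uniq.
  by move=> u hu; rewrite /U mem_undup mem_cat hu.
by move=> u _ hu; apply: V3.
Qed.

End Assoc.

Lemma piQ_contra : is_contramodule piQ.
Proof.
split; first by move=> a F G _ _; exact: piQ_lin.
split; first by move=> p F _; exact: piQ_counit.
by move=> f hf1 hf2; exact: piQ_assoc.
Qed.


Lemma inTheta_Q (x : Ob E) (q : QT T) : inTheta piQ x q <-> exists m : Mv T x, emb m = q.
Proof.
split.
  by move=> [p ->]; rewrite piQ_evfam Mact_id; exists (p x).
move=> [m <-]; exists (emb m).
by rewrite piQ_evfam Mact_id emb_eq.
Qed.

Lemma iso_Q : iso_Theta T piQ.
Proof.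
exists (fun x m => emb m); split; first by move=> x; exact: emb_lin.
split.
  by move=> x m1 m2 h; rewrite -(emb_eq m1) h emb_eq.
split; first by move=> x q; rewrite inTheta_Q.
by move=> x y f m; rewrite piQ_evfam emb_eq.
Qed.

Lemma lf_Q : (forall x : Ob E, exists s : seq (Mv T x),
    forall m, exists c : nat -> k, m = \sum_(i < size s) c i *: s`_i) ->
  contra_locally_finite piQ.
Proof.
move=> hsp x; have [s hs] := hsp x.
exists (map (@emb x) s); split.
  move=> q /In_map [m [_ ->]]; apply/inTheta_Q; by exists m.
move=> q /inTheta_Q [m <-]; have [c ->] := hs m.
exists (fun i => c i).
rewrite (lin_sum _ _ _ (@emb_lin x)).
rewrite -(big_mkord xpredT (fun i => c i *: (map (@emb x) s)`_i)) -(big_mkord xpredT (fun i => c i *: emb s`_i)).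
rewrite size_map; apply: eq_big_nat => i /andP [_ hi].
by rewrite (nth_map 0) // .
Qed.

End PC.

Lemma span_nat (k : fieldType) (V : lmodType k) (s : seq V) (m : V) :
  (exists cs : 'I_(size s) -> k, m = \sum_(i < size s) cs i *: s`_i) ->
  exists c : nat -> k, m = \sum_(i < size s) c i *: s`_i.
Proof.
move=> [cs ->]; exists (fun n => match insub n with Some i => cs i | None => 0 end).
by apply: eq_bigr => i _; rewrite valK.
Qed.

Section VS.
Variables (k : fieldType) (V : vectType k) (S : V -> Prop).
Hypothesis S0 : S 0.
Hypothesis Slin : forall a u v, S u -> S v -> S (a *: u + v).

Lemma vs_aux n : forall U : {vspace V}, (forall a, a \in U -> S a) ->
  (\dim (fullv : {vspace V}) - \dim U <= n)%N ->
  exists U' : {vspace V}, forall a, a \in U' <-> S a.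
Proof.
elim: n => [|n IH] U hU hd.
  exists U => a; split; first exact: hU.
  move=> ha; apply: contrapT => hn.
  have hle : (U <= fullv)%VS by exact: subvf.
  have hge : (\dim (fullv : {vspace V}) <= \dim U)%N by move: hd; rewrite leqn0 subn_eq0.
  have /eqP hUf : U == fullv by rewrite eqEdim hle hge.
  by apply: hn; rewrite hUf memvf.
case: (classic (exists a, S a /\ a \notin U)) => [[a [ha haU]]|hn]; last first.
  exists U => b; split; first exact: hU.
  move=> hb; apply: contrapT => hbU; apply: hn; exists b; split => //.
  by apply/negP.
set U2 := (U + <[a]>)%VS.
have hU2 : forall b, b \in U2 -> S b.
  move=> b /memv_addP [u hu [v /vlineP [c ->] ->]].
  have := Slin c ha (hU u hu); by rewrite addrC.
apply: (IH U2 hU2).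
have hlt : (\dim U < \dim U2)%N.
  rewrite ltnNge; apply/negP => hle.
  have /eqP hUU : U == U2 by rewrite eqEdim addvSl.
  move/negP: haU; apply; rewrite hUU; apply/memv_addP; exists 0; first exact: mem0v.
  by exists a; [exact: memv_line | rewrite add0r].
have h2 : (\dim U2 <= \dim (fullv : {vspace V}))%N by apply: dimvS; exact: subvf.
move: hd hlt h2; set d1 := \dim (fullv : {vspace V}); set d2 := \dim U2; set d0 := \dim U.
move=> hd hlt h2; lia.
Qed.

Lemma vs_of_pred : exists U : {vspace V}, forall a, a \in U <-> S a.
Proof.
apply: (@vs_aux (\dim (fullv : {vspace V})) 0%VS); last exact: leq_subr.
by move=> a; rewrite memv0 => /eqP ->.
Qed.
End VS.

Lemma stabilize (k : fieldType) (V : lmodType k) (s : seq V) (W : nat -> V -> Prop) :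
  (forall v, exists c : nat -> k, v = \sum_(i < size s) c i *: s`_i) ->
  (forall n, W n 0) ->
  (forall n a u v, W n u -> W n v -> W n (a *: u + v)) ->
  (forall n v, W n.+1 v -> W n v) ->
  exists N0, forall n, (N0 <= n)%N -> forall v, W N0 v -> W n v.
Proof.
move=> hs hW0 hWl hWd.
pose sig (a : 'rV[k]_(size s)) : V := \sum_(i < size s) a 0 i *: s`_i.
have sig_lin : forall c a b, sig (c *: a + b) = c *: sig a + sig b.
  move=> c a b; rewrite /sig scaler_sumr -big_split; apply: eq_bigr => i _.
  by rewrite !mxE scalerDl scalerA.
have sig0 : sig 0 = 0 by rewrite /sig big1 // => i _; rewrite mxE scale0r.
have hU : forall n, exists U : {vspace 'rV[k]_(size s)}, forall a, a \in U <-> W n (sig a).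
  move=> n; apply: vs_of_pred; first by rewrite sig0.
  by move=> c a b ha hb; rewrite sig_lin; exact: hWl.
pose U n := epsilon (inhabits 0%VS) (fun U : {vspace 'rV[k]_(size s)} =>
   forall a, a \in U <-> W n (sig a)).
have hUs : forall n a, a \in U n <-> W n (sig a).
  move=> n; exact: (epsilon_spec (inhabits 0%VS) _ (hU n)).
have hdec : forall m n, (m <= n)%N -> (U n <= U m)%VS.
  move=> m n /subnK <-; elim: (n - m)%N => [|d IH]; first exact: subvv.
  apply: subv_trans IH; apply/subvP => a /hUs ha; apply/hUs; exact: hWd.
have hex : exists d : nat, `[< exists n, \dim (U n) = d >].
  by exists (\dim (U 0%N)); apply/asboolP; exists 0%N.
case: (ex_minnP hex) => d /asboolP [N0 hN0] hmin.
exists N0 => n hn v hv.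
have [c hc] := hs v.
pose a : 'rV[k]_(size s) := \row_i c i.
have hva : v = sig a by rewrite hc /sig; apply: eq_bigr => i _; rewrite mxE.
have : U n == U N0.
  rewrite eqEdim hdec //= hN0; apply: hmin; apply/asboolP; by exists n.
move/eqP => hUn; rewrite hva; apply/hUs; rewrite hUn; apply/hUs; by rewrite -hva.
Qed.

Lemma size_length (A : Type) (s : seq A) : size s = length s.
Proof. by elim: s => //= a s ->. Qed.

Lemma lin_sum1 (k : fieldType) (U V : lmodType k) (f : U -> V) I (s : seq I) (u : I -> U) :
  is_lin f -> f (\sum_(i <- s) u i) = \sum_(i <- s) f (u i).
Proof.
move=> hf; elim: s => [|i s IH]; first by rewrite !big_nil; exact: lin0.
by rewrite !big_cons -{1}[u i]scale1r hf scale1r IH.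
Qed.

Lemma sum_if_eq (I : eqType) (V : zmodType) (r : seq I) (i : I) (X : V) :
  uniq r -> \sum_(z <- r) (if i == z then X else 0) = if i \in r then X else 0.
Proof.
elim: r => [|a r IH]; first by rewrite big_nil.
rewrite /= big_cons in_cons => /andP [har hr]; rewrite IH //.
case: eqP => [->|_] /=; last by rewrite add0r.
by rewrite (negbTE har) addr0.
Qed.

Lemma le_sum_in (I : eqType) (r : seq I) (F : I -> nat) (z : I) :
  z \in r -> (F z <= \sum_(x <- r) F x)%N.
Proof.
elim: r => [|a r IH] //; rewrite in_cons big_cons => /orP [/eqP ->|h].
  exact: leq_addr.
by apply: leq_trans (IH h) _; exact: leq_addl.
Qed.

Section PA.
Variables (k : fieldType) (E : kcat k).
Variable hS : left_strictly_locally_finite E.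
Variable M : lmodE E.
Variable P : lmodType k.
Variable pi : fam E P -> P.
Hypothesis hc : is_contramodule pi.
Variable phi : forall x : Ob E, Mv M x -> P.
Arguments phi : clear implicits.
Hypothesis phi_lin : forall x, is_lin (phi x).
Hypothesis phi_inj : forall x, injective (phi x).
Hypothesis phi_act : forall (x y : Ob E) (f : Hom E x y) (m : Mv M x),
  phi y (Mact f m) = pi (evfam f (phi x m)).
Hypothesis hsp : forall y : Ob E, exists s : seq (Mv M y),
  forall m, exists c : nat -> k, m = \sum_(i < size s) c i *: s`_i.

Definition Wp (N : nat) (y : Ob E) (v : Mv M y) : Prop :=
  exists s : seq {x : Ob E & (Hom E x y * Mv M x)%type},
    (forall t, List.In t s -> deep hS N (tagged t).1) /\
    v = \sum_(t <- s) Mact (tagged t).1 (tagged t).2.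
Arguments Wp : clear implicits.

Lemma Wp_le m n y v : (m <= n)%N -> Wp n y v -> Wp m y v.
Proof.
move=> hmn [s [hs ->]]; exists s; split => // t ht; exact: deep_le hmn (hs t ht).
Qed.

Lemma Wp0 n y : Wp n y 0.
Proof. by exists [::]; split => //; rewrite big_nil. Qed.

Lemma Wp_lin n y a u v : Wp n y u -> Wp n y v -> Wp n y (a *: u + v).
Proof.
move=> [s1 [h1 ->]] [s2 [h2 ->]].
exists (map (fun t => existT (fun x => (Hom E x y * Mv M x)%type) (tag t)
         ((tagged t).1, a *: (tagged t).2)) s1 ++ s2); split.
  move=> t /List.in_app_iff [/In_map [t' [ht' ->]]|ht] /=; [exact: h1|exact: h2].
rewrite big_cat big_map scaler_sumr; congr (_ + _); apply: eq_bigr => t _.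
by rewrite Mact_scalem.
Qed.

Lemma Wp_stab y : exists N0, forall n, (N0 <= n)%N -> forall v, Wp N0 y v -> Wp n y v.
Proof.
have [s hs] := hsp y.
apply: (@stabilize _ _ s (fun n => Wp n y)) => //.
- by move=> n; exact: Wp0.
- by move=> n a u v; exact: Wp_lin.
- by move=> n v; apply: Wp_le.
Qed.

Definition Nst (y : Ob E) : nat :=
  epsilon (inhabits 0%N) (fun N0 => forall n, (N0 <= n)%N -> forall v, Wp N0 y v -> Wp n y v).

Lemma Nst_spec y n : (Nst y <= n)%N -> forall v, Wp (Nst y) y v -> Wp n y v.
Proof. exact: (epsilon_spec (inhabits 0%N) _ (Wp_stab y)). Qed.

Definition Vs (y : Ob E) (v : Mv M y) : Prop := Wp (Nst y) y v.
Arguments Vs : clear implicits.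

Lemma Vs_gen y v : Vs y v ->
  exists s : seq {w : Ob E & (Hom E w y * Mv M w)%type},
    (forall t, List.In t s -> List.In (tag t) (Xs hS y) /\ Vs (tag t) (tagged t).2) /\
    v = \sum_(t <- s) Mact (tagged t).1 (tagged t).2.
Proof.
move=> hv.
set K := maxn (Nst y) (\max_(w <- Xs hS y) Nst w).
have [s0 [hs0 ->]] := Nst_spec (leq_trans (leq_maxl _ _) (leqnSn K)) hv.
have [F hF] := @choose_dfun _ (fun t : {x : Ob E & (Hom E x y * Mv M x)%type} =>
      seq {w : Ob E & (Hom E w y * Hom E (tag t) w)%type})
  (fun _ => [::]) s0 (fun t st =>
    (forall r, List.In r st -> List.In (tag r) (Xs hS y) /\ deep hS K (tagged r).2)
    /\ (tagged t).1 = \sum_(r <- st) comp E (tagged r).1 (tagged r).2)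
  (fun t ht => hs0 t ht).
exists (flatten (map (fun t => map (fun r =>
   existT (fun w => (Hom E w y * Mv M w)%type) (tag r)
      ((tagged r).1, Mact (tagged r).2 (tagged t).2)) (F t)) s0)).
split.
  move=> u /In_flatten [l [/In_map [t [ht ->]] /In_map [r [hr ->]]]] /=.
  have [hr1 hr2] := (proj1 (hF t ht)) r hr.
  split => //.
  exists [:: existT (fun x => (Hom E x (tag r) * Mv M x)%type) (tag t)
            ((tagged r).2, (tagged t).2)].
  split; last by rewrite big_seq1.
  move=> w [<-|//] /=; apply: deep_le hr2; apply: leq_trans (leq_maxr _ _).
  by apply: (@leq_bigmax_seq (obT E) (Xs hS y) xpredT Nst (tag r)) => //; apply/In_mem.
rewrite big_flatten big_map /=; apply: eq_sum_In => t ht.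
rewrite big_map (proj2 (hF t ht)) Mact_sumf; apply: eq_bigr => r _.
by rewrite Mact_comp.
Qed.


Definition rspec (w : Ob E) (v : Mv M w) (s : seq {u : Ob E & (Hom E u w * Mv M u)%type}) :=
  (forall t, List.In t s -> List.In (tag t) (Xs hS w) /\ Vs (tag t) (tagged t).2) /\
  v = \sum_(t <- s) Mact (tagged t).1 (tagged t).2.

Definition rho (w : Ob E) (v : Mv M w) : seq {u : Ob E & (Hom E u w * Mv M u)%type} :=
  epsilon (inhabits [::]) (rspec v).

Lemma rho_spec w v : Vs w v -> rspec v (rho v).
Proof. move=> hv; exact: (epsilon_spec (inhabits [::]) _ (Vs_gen hv)). Qed.

Section Swindle.
Variables (y0 : Ob E) (v0 : Mv M y0).
Hypothesis hv0 : Vs y0 v0.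
Hypothesis hlf : locally_finite E.

Definition ent := {u : Ob E & (Hom E u y0 * Mv M u)%type}.
Definition mk (u : Ob E) (h : Hom E u y0) (m : Mv M u) : ent :=
  existT (fun u => (Hom E u y0 * Mv M u)%type) u (h, m).

Definition step (t : ent) : seq ent :=
  map (fun r => mk (comp E (tagged t).1 (tagged r).1) (tagged r).2) (rho (tagged t).2).

Fixpoint chains (j : nat) : seq ent :=
  match j with
  | 0 => [:: mk (idm E y0) v0]
  | j'.+1 => flatten (map step (chains j'))
  end.

Definition inv (j : nat) (t : ent) : Prop :=
  Vs (tag t) (tagged t).2 /\ preceq (tag t) y0 /\
  exists path : seq (Ob E), size path = j.+1 /\ List.NoDup path /\
    forall z, List.In z path -> preceq (tag t) z /\ preceq z y0.

Lemma chains_inv j t : List.In t (chains j) -> inv j t.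
Proof.
elim: j t => [|j IH] t /=.
  case=> [<-|//]; split => //; split; first exact: preceq_refl.
  exists [:: y0]; split => //; split; first by constructor; [case|constructor].
  by move=> z [<-|//]; split; exact: preceq_refl.
move=> /In_flatten [l [/In_map [t0 [ht0 ->]] /In_map [r [hr ->]]]] /=.
have [hV0 [hp0 [path [hsz [hnd hpath]]]]] := IH t0 ht0.
have [hr1 hr2] := (proj1 (rho_spec hV0)) r hr.
have [hpr1 hpr2] := Xs_prec hr1.
split => //; split; first exact: preceq_trans hpr1 hp0.
exists (tag r :: path); split; first by rewrite /= hsz.
split.
  constructor => // hin; apply: hpr2; exact: (proj1 (hpath _ hin)).
move=> z [<-|hz]; first by split; [exact: preceq_refl|exact: preceq_trans hpr1 hp0].
have [h1 h2] := hpath z hz; split => //; exact: preceq_trans hpr1 h1.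
Qed.

Lemma chains_bound j t (u : Ob E) : List.In t (chains j) -> preceq u (tag t) ->
  (j < size (interval_list u y0))%N.
Proof.
move=> ht hu; have [_ [hp [path [hsz [hnd hpath]]]]] := chains_inv ht.
rewrite -hsz size_length size_length; apply/leP.
apply: List.NoDup_incl_length => // z hz.
have [h1 h2] := hpath z hz.
exact: (proj2 (interval_spec hlf u y0)) (preceq_trans hu h1) h2.
Qed.


Definition Et (t : ent) : fam E P := fun u w c =>
  evfam (idm E (tag t)) (phi (tag t) (tagged t).2) c
  - \sum_(r <- rho (tagged t).2) evfam (tagged r).1 (phi (tag r) (tagged r).2) c.
Arguments Et : clear implicits.

Lemma linfam_sum1 I (s : seq I) (F : I -> fam E P) :
  (forall i, linfam (F i)) -> linfam (fun x y c => \sum_(i <- s) F i x y c).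
Proof.
move=> hF; have := linfam_sum s (fun _ => 1) hF.
have -> : (fun x y c => \sum_(i <- s) 1 *: F i x y c) = (fun x y c => \sum_(i <- s) F i x y c).
  by famext; apply: eq_bigr => i _; rewrite scale1r.
by [].
Qed.

Lemma pi_sum1 I (s : seq I) (F : I -> fam E P) :
  (forall i, linfam (F i)) ->
  pi (fun x y c => \sum_(i <- s) F i x y c) = \sum_(i <- s) pi (F i).
Proof.
move=> hF; have := pi_sum hc s (fun _ => 1) hF.
have -> : (fun x y c => \sum_(i <- s) 1 *: F i x y c) = (fun x y c => \sum_(i <- s) F i x y c).
  by famext; apply: eq_bigr => i _; rewrite scale1r.
by move=> ->; apply: eq_bigr => i _; rewrite scale1r.
Qed.

Lemma Et_lin t : linfam (Et t).
Proof.
apply: linfam_sub; first exact: evfam_lin.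
by apply: linfam_sum1 => r; exact: evfam_lin.
Qed.

Lemma pi_Et t : Vs (tag t) (tagged t).2 -> pi (Et t) = 0.
Proof.
move=> hV; rewrite /Et (pi_sub hc); last first.
- by apply: linfam_sum1 => r; exact: evfam_lin.
- exact: evfam_lin.
have h := @pi_sum1 _ (rho (tagged t).2)
   (fun r => evfam (tagged r).1 (phi (tag r) (tagged r).2)) (fun r => evfam_lin _ _).
cbv beta in h; rewrite h.
rewrite -phi_act Mact_id.
under eq_bigr => r _ do rewrite -phi_act.
rewrite -lin_sum1 // -(proj2 (rho_spec hV)); exact: subrr.
Qed.

Definition B (z : Ob E) : nat := size (interval_list z y0).

Definition ff (z w : Ob E) (c : Cxy z w) : fam E P := fun u w' c' =>
  \sum_(j < B z) \sum_(t <- chains j) ((evfam (tagged t).1 (1 : k^o) c : k) *: Et t u w' c').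
Arguments ff : clear implicits.

Lemma ff_lin1 z w c : linfam (ff z w c).
Proof.
move=> u w' a c1 c2; rewrite /ff scaler_sumr -big_split; apply: eq_bigr => j _.
rewrite scaler_sumr -big_split; apply: eq_bigr => t _.
by rewrite Et_lin scalerDr !scalerA mulrC.
Qed.

Lemma ff_lin2 (z w : Ob E) (a : k) (c d : Cxy z w) (z' w' : Ob E) (c' : Cxy z' w') :
  ff z w (a *: c + d) z' w' c' = a *: ff z w c z' w' c' + ff z w d z' w' c'.
Proof.
rewrite /ff scaler_sumr -big_split; apply: eq_bigr => j _.
rewrite scaler_sumr -big_split; apply: eq_bigr => t _.
by rewrite evfam_lin scalerDl scalerA.
Qed.

Lemma pi_ff z w c : pi (ff z w c) = 0.
Proof.
have h := @pi_sum1 _ (index_enum 'I_(B z)) (fun j => fun u w' c' =>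
   \sum_(t <- chains j) ((evfam (tagged t).1 (1 : k^o) c : k) *: Et t u w' c'))
   (fun j => linfam_sum _ _ (fun t => Et_lin t)).
cbv beta in h; rewrite /ff h.
apply: big1 => j _.
have h2 := pi_sum hc (chains j) (fun t => (evfam (tagged t).1 (1 : k^o) c : k)) (fun t => Et_lin t).
cbv beta in h2; rewrite h2.
apply: sum0_In => t ht; rewrite pi_Et ?scaler0 //; exact: (proj1 (chains_inv ht)).
Qed.

Definition G (u : Ob E) (c : Cxy u y0) (t : ent) : P :=
  evfam (tagged t).1 (phi (tag t) (tagged t).2) c
  - \sum_(r <- rho (tagged t).2) evfam (comp E (tagged t).1 (tagged r).1) (phi (tag r) (tagged r).2) c.

Lemma term_eval (z u : Ob E) (c : Cxy u y0) (t : ent) :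
  \sum_(i < \dim (fullv : {vspace Hom E u z}))
     ((evfam (tagged t).1 (1 : k^o) (precomp c (gb i)) : k) *: Et t u z (dualb i))
  = if (tag t == z :> obT E) then G c t else 0.
Proof.
case: t => z' [h m] /=.
case: eqP => [hz|hz]; last first.
  by apply: big1 => i _; rewrite evfam_ne ?scale0r // => -[].
subst z'.
transitivity (Et (mk h m) u z (\sum_(i < \dim (fullv : {vspace Hom E u z}))
     ((lam h c) (gb i) : k) *: dualb i)).
  rewrite (lin_sum _ _ _ (@Et_lin (mk h m) u z)); apply: eq_bigr => i _.
  by rewrite evfam_eq lamE precompE /GRing.scale /= mulr1.
rewrite -dual_expand /Et /G /= evfam_lam comp_idr; congr (_ - _).
by apply: eq_bigr => r _; rewrite evfam_lam.
Qed.

Lemma Gzero (u : Ob E) (c : Cxy u y0) j t : List.In t (chains j) -> ~ preceq u (tag t) ->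
  G c t = 0.
Proof.
move=> ht hn; have [hV _] := chains_inv ht.
rewrite /G evfam_ne; last by case=> hu _; apply: hn; rewrite hu; exact: preceq_refl.
rewrite sum0_In ?subrr // => r hr; rewrite evfam_ne // => -[hu _].
have [h1 _] := (proj1 (rho_spec hV)) r hr.
have [hp _] := Xs_prec h1.
by apply: hn; rewrite -hu.
Qed.

Definition a_seq (u : Ob E) (c : Cxy u y0) (j : nat) : P :=
  \sum_(t <- chains j) evfam (tagged t).1 (phi (tag t) (tagged t).2) c.

Lemma sumG (u : Ob E) (c : Cxy u y0) j :
  \sum_(t <- chains j) G c t = a_seq c j - a_seq c j.+1.
Proof.
rewrite /G sumrB; congr (_ - _).
rewrite /a_seq /= big_flatten big_map; apply: eq_bigr => t _.
by rewrite /step big_map.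
Qed.

Lemma aK (u : Ob E) (c : Cxy u y0) : a_seq c (B u) = 0.
Proof.
apply: sum0_In => t ht; rewrite evfam_ne // => -[hu _].
have := chains_bound ht (u := u); rewrite -hu /B ltnn => h.
by have := h (preceq_refl _).
Qed.

Lemma a0 (u : Ob E) (c : Cxy u y0) : a_seq c 0 = evfam (idm E y0) (phi y0 v0) c.
Proof. by rewrite /a_seq /= big_seq1. Qed.

Lemma core (u w : Ob E) (c : Cxy u w) : comul_fam ff c = evfam (idm E y0) (phi y0 v0) c.
Proof.
rewrite /comul_fam.
case: (excluded_middle_informative (w = y0)) => [hw|hw]; last first.
  rewrite evfam_ne; last by case=> _ h; apply: hw; rewrite h.
  apply: big1 => z _; apply: big1 => i _; rewrite /ff; apply: big1 => j _; apply: big1 => t _.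
  by rewrite evfam_ne ?scale0r // => -[_ h]; apply: hw; rewrite h.
subst w.
have hIu : uniq (interval_list u y0 : seq (obT E)).
  by apply/uniq_NoDup; exact: (proj1 (interval_spec hlf u y0)).
set K := B u.
set N := (K + \sum_(z <- (interval_list u y0 : seq (obT E))) B z)%N.
set H := fun (z : Ob E) (j : nat) =>
  \sum_(t <- chains j) (if (tag t == z :> obT E) then G c t else 0).
transitivity (\sum_(z <- interval_list u y0) \sum_(j < N) H z j).
  apply: eq_sum_In => z hz; rewrite /ff exchange_big /=.
  transitivity (\sum_(j < B z) H z j).
    apply: eq_bigr => j _; rewrite exchange_big /=; apply: eq_bigr => t _.
    exact: term_eval.
  have hBz : (B z <= N)%N.
    apply: leq_trans (leq_addl _ _).
    by apply: (@le_sum_in (obT E)); apply/In_mem.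
  rewrite (big_ord_widen N (H z) hBz) big_mkcond; apply: eq_bigr => j _.
  case: ifP => // hj; apply/esym/sum0_In => t ht; case: eqP => // hzt.
  move: hj; rewrite /B => hj; have := chains_bound ht (u := z); rewrite hj -hzt => h.
  by have := h (preceq_refl _).
transitivity (\sum_(j < N) \sum_(t <- chains j) G c t).
  rewrite exchange_big /=; apply: eq_bigr => j _; rewrite /H exchange_big /=.
  apply: eq_sum_In => t ht; rewrite (@sum_if_eq (obT E)) //.
  case: ifP => // hnin; apply/esym; apply: (@Gzero u c j t ht) => hp.
  move/negP: hnin; apply; apply/In_mem.
  exact: (proj2 (interval_spec hlf u y0)) hp (proj1 (proj2 (chains_inv ht))).
transitivity (\sum_(j < K) \sum_(t <- chains j) G c t).
  symmetry; rewrite (big_ord_widen N (fun j => \sum_(t <- chains j) G c t)) ?leq_addr //.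
  rewrite big_mkcond; apply: eq_bigr => j _; case: ifP => // hj.
  apply/esym/sum0_In => t ht; apply: (@Gzero u c j t ht) => hp.
  by have := chains_bound ht hp; rewrite -/(B u) -/K hj.
under eq_bigr => j _ do rewrite sumG.
rewrite -(big_mkord xpredT (fun j => a_seq c j - a_seq c j.+1)).
rewrite -[LHS]opprK -sumrN.
under eq_bigr => j _ do rewrite opprB.
by rewrite telescope_sumr // opprB aK a0 subr0.
Qed.

Lemma v0_zero : v0 = 0.
Proof.
have h := (proj2 (proj2 hc)) ff (fun z w c => ff_lin1 c) ff_lin2.
have e1 : (fun z w c => pi (ff z w c)) = fam0 P by famext; rewrite pi_ff.
have e2 : comul_fam ff = evfam (idm E y0) (phi y0 v0) by famext; apply: core.
rewrite e1 (pi0 hc) e2 -phi_act Mact_id in h.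
apply: (@phi_inj y0); rewrite -h; symmetry; exact: lin0 (@phi_lin y0).
Qed.

End Swindle.

Lemma nil_M (hlf : locally_finite E) : Nil hS M.
Proof.
move=> y; exists (Nst y) => x f m hd.
apply: (@v0_zero y (Mact f m)) => //.
exists [:: existT (fun x => (Hom E x y * Mv M x)%type) x (f, m)].
split; last by rewrite big_seq1.
by move=> t [<-|].
Qed.

End PA.

Section Span.
Variables (k : fieldType) (V : lmodType k).

Definition spanned (s : seq V) (v : V) : Prop :=
  exists c : nat -> k, v = \sum_(i < size s) c i *: s`_i.

Lemma spanned_cat (s1 s2 : seq V) u w : spanned s1 u -> spanned s2 w -> spanned (s1 ++ s2) (u + w).
Proof.
move=> [c1 ->] [c2 ->].
pose c := fun i => if (i < size s1)%N then c1 i else c2 (i - size s1)%N.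
exists c.
rewrite -(big_mkord xpredT (fun i => c1 i *: s1`_i)) -(big_mkord xpredT (fun i => c2 i *: s2`_i)).
rewrite -(big_mkord xpredT (fun i => c i *: (s1 ++ s2)`_i)).
rewrite size_cat (big_cat_nat _ (leq_addr (size s2) (size s1))) //=.
congr (_ + _).
  by apply: eq_big_nat => i /andP [_ hi]; rewrite /c hi nth_cat hi.
rewrite -{1}(add0n (size s1)) big_addn addKn; apply: eq_big_nat => i _.
by rewrite /c ltnNge leq_addl /= addnK nth_cat ltnNge leq_addl /= addnK.
Qed.

End Span.

Lemma spanned_lin (k : fieldType) (V W : lmodType k) (f : V -> W) (s : seq V) v :
  is_lin f -> spanned s v -> spanned (map f s) (f v).
Proof.
move=> hf [c ->]; exists c; rewrite (lin_sum _ _ _ hf).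
rewrite -(big_mkord xpredT (fun i => c i *: (map f s)`_i)) -(big_mkord xpredT (fun i => c i *: f s`_i)).
rewrite size_map; apply: eq_big_nat => i /andP [_ hi].
by rewrite (nth_map 0).
Qed.

Lemma lin_sub (k : fieldType) (U V : lmodType k) (f : U -> V) u v :
  is_lin f -> f (u - v) = f u - f v.
Proof.
move=> hf; have := hf (-1) v u; rewrite !scaleN1r => h.
by rewrite [u - v]addrC h addrC.
Qed.

Section Final.
Variables (k : fieldType) (E : kcat k).
Variable hS : left_strictly_locally_finite E.

Lemma class_span (M : lmodE E) : in_Theta_class M ->
  forall y : Ob E, exists s : seq (Mv M y), forall m, spanned s m.
Proof.
move=> [P [pi [hc [hlf [phi [hl [hi [him hact]]]]]]]] y.
have [s [hs1 hs2]] := hlf y.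
pose pre (q : P) : Mv M y := epsilon (inhabits 0) (fun m => phi y m = q).
have hpre : forall q, List.In q s -> phi y (pre q) = q.
  move=> q hq; apply: (epsilon_spec (inhabits 0) (fun m => phi y m = q)).
  by apply/him; exact: hs1.
exists (map pre s) => m.
have [cs hcs] := hs2 (phi y m) (proj2 (him y (phi y m)) (ex_intro _ m erefl)).
have [c hc'] := span_nat (ex_intro _ cs hcs).
exists c; apply: (@hi y); rewrite hc' (lin_sum _ _ _ (@hl y)).
rewrite -(big_mkord xpredT (fun i => c i *: s`_i)).
rewrite -(big_mkord xpredT (fun i => c i *: phi y (map pre s)`_i)).
rewrite size_map; apply: eq_big_nat => i /andP [_ hi'].
rewrite (nth_map 0) // hpre //; apply/In_mem; exact: mem_nth.
Qed.

Lemma class_nil (M : lmodE E) : in_Theta_class M -> Nil hS M.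
Proof.
move=> hM; have hsp := class_span hM.
move: hM => [P [pi [hc [hlf [phi [hl [hi [him hact]]]]]]]].
apply: (@nil_M _ _ hS M P pi hc phi hl hi hact _ (proj1 hS)).
by move=> y; have [s hs] := hsp y; exists s.
Qed.

End Final.

Theorem corollary6p1 (k : fieldType) (E : kcat k) :
  left_strictly_locally_finite E ->
  forall (P' T P'' : lmodE E)
         (alpha : forall x, Mv P' x -> Mv T x)
         (beta : forall x, Mv T x -> Mv P'' x),
    short_exact alpha beta ->
    in_Theta_class P' -> in_Theta_class P'' -> in_Theta_class T.
Proof.
move=> hS P' T P'' alpha beta hex h1 h2.
have hnil : Nil hS T := nil_ext hex (class_nil hS h1) (class_nil hS h2).
exists (QT T), (@piQ _ _ T); split; first exact: piQ_contra hnil.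
split; last exact: iso_Q hnil.
apply: (lf_Q hnil) => x.
have [s1 hs1] := class_span h1 x; have [s2 hs2] := class_span h2 x.
move: hex => [[ha1 ha2] [[hb1 hb2] [hinj [hsurj hexa]]]].
pose sec (q : Mv P'' x) : Mv T x := epsilon (inhabits 0) (fun t => beta x t = q).
have hsec : forall q, beta x (sec q) = q.
  by move=> q; apply: (epsilon_spec (inhabits 0) (fun t => beta x t = q)); exact: hsurj.
exists (map (alpha x) s1 ++ map sec s2) => t.
have [c2 hc2] := hs2 (beta x t).
set u := \sum_(i < size (map sec s2)) c2 i *: (map sec s2)`_i.
have hbu : beta x u = beta x t.
  rewrite /u (lin_sum _ _ _ (@hb1 x)) hc2.
  rewrite -(big_mkord xpredT (fun i => c2 i *: beta x (map sec s2)`_i)).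
  rewrite -(big_mkord xpredT (fun i => c2 i *: s2`_i)) size_map.
  by apply: eq_big_nat => i /andP [_ hi]; rewrite (nth_map 0) // hsec.
have [a ha] : exists a, alpha x a = t - u.
  by apply/hexa; rewrite (lin_sub _ _ (@hb1 x)) hbu subrr.
have -> : t = alpha x a + u by rewrite ha subrK.
apply: spanned_cat; first exact: spanned_lin (@ha1 x) (hs1 a).
by exists c2.
Qed.
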